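(* Consider the online asynchronous testing setting with conflict sets described in the context, with test levels $\alpha_j\ge0$ that are $\mathcal{F}^{-\mathcal{X}^j}$-measurable for every $j$. Suppose that for every $t\in\mathcal{H}^0$ and every $u\in[0,1]$, $\mathbb{P}(P_t\le u\mid\mathcal{F}^{-\mathcal{X}^{E_t}})\le u$. Then, for every $t\in\mathbb{N}$, if $\mathrm{FDP}^*(t)\le\alpha$ almost surely, where $$\mathrm{FDP}^*(t)=\frac{\sum_{j\le t,\ j\in\mathcal{H}^0}\alpha_j}{(\sum_{j:\,E_j\le t}R_j)\vee1},$$ then $\mathrm{mFDR}(t)\le\alpha$.
   Context: Hypotheses $H_1,H_2,\dots$ are tested; the test of $H_t$ starts at step $t$, is run at level $\alpha_t$ (and possibly with a candidacy threshold $\lambda_t\in[\alpha_t,1)$), and produces a $p$-value $P_t$. $\mathcal{H}^0$ is the fixed set of indices of true nulls. Test $t$ has a fixed decision time $E_t\ge t$. $R_t=\mathbf{1}\{P_t\le\alpha_t\}$, $C_t=\mathbf{1}\{P_t\le\lambda_t\}$. $\{L_t\}$ is a fixed sequence of nonnegative integer lags with $L_{t+1}\le L_t+1$; the conflict set is $\mathcal{X}^t=\{i\in[t-1]:E_i\ge t\}\cup(\{t-L_t,\dots,t-1\}\cap[t-1])$. $\mathcal{F}^{-\mathcal{X}^t}$ denotes either $\sigma(R_i:i\le t-1,\ i\notin\mathcal{X}^t)$ or $\sigma(R_i,C_i:i\le t-1,\ i\notin\mathcal{X}^t)$. $\mathcal{R}(t)=\{i\in[t]:E_i\le t,\ P_i\le\alpha_i\}$,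 $\mathcal{V}(t)=\mathcal{R}(t)\cap\mathcal{H}^0$, $\mathrm{mFDR}(t)=\mathbb{E}|\mathcal{V}(t)|/\mathbb{E}[|\mathcal{R}(t)|\vee1]$. *)

(* Defs.v *)
From HB Require Import structures.
From mathcomp Require Import all_boot all_order all_algebra.
From mathcomp Require Import all_classical all_reals all_analysis.
Set Implicit Arguments. Unset Strict Implicit. Unset Printing Implicit Defensive.
Import Order.TTheory GRing.Theory Num.Theory.
Local Open Scope classical_set_scope.
Local Open Scope ring_scope.

(* Hypotheses are indexed by positive integers 1, 2, ... ; index 0 is unused. *)

(* i is NOT in the conflict set X^t (and i in [t-1]):
   1 <= i <= t-1, E_i < t and i < t - L_t. *)
Definition not_conflict (E L : nat -> nat) (t i : nat) : bool :=
  [&& (1 <= i)%N, (i < t)%N, (E i < t)%N & (i + L t < t)%N].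

(* F^{-X^t}: sigma-algebra generated by R_i (and, if withC, also C_i)
   for i <= t-1, i notin X^t.  sigma(R_i) is generated by the event {P_i <= alpha_i}. *)
Definition F_minusX {d} {T : measurableType d} {R : realType}
  (withC : bool) (E L : nat -> nat) (pv lev lam : nat -> T -> R) (t : nat)
  : set (set T) :=
  <<s [set A | exists i, not_conflict E L t i /\
        (A = [set x | pv i x <= lev i x] \/
         (withC /\ A = [set x | pv i x <= lam i x]))] >>.

Definition measurable_wrt {d} {T : measurableType d} {R : realType}
  (G : set (set T)) (f : T -> R) : Prop :=
  forall B : set R, measurable B -> G (f @^-1` B).

Definition numR {T} {R : realType} (E : nat -> nat) (pv lev : nat -> T -> R)
  (t : nat) (x : T) : R :=
  (\sum_(1 <= i < t.+1 | (E i <= t)%N) (((pv i x <= lev i x)%R : bool) : nat)%:R).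

Definition numV {T} {R : realType} (H0 : pred nat) (E : nat -> nat)
  (pv lev : nat -> T -> R) (t : nat) (x : T) : R :=
  (\sum_(1 <= i < t.+1 | H0 i && (E i <= t)%N) (((pv i x <= lev i x)%R : bool) : nat)%:R).

(* mFDR(t) = E|V(t)| / E[|R(t)| v 1]  (both expectations are finite: the
   integrands are bounded by t). *)
Definition mFDR {d} {T : measurableType d} {R : realType} (Pr : probability T R)
  (H0 : pred nat) (E : nat -> nat) (pv lev : nat -> T -> R) (t : nat) : R :=
  fine ('E_Pr[numV H0 E pv lev t])%E /
  fine ('E_Pr[fun x => Num.max (numR E pv lev t x) 1%R])%E.

(* FDP*(t) = (sum_{j<=t, j in H0} alpha_j) / ((sum_{j : E_j <= t} R_j) v 1).
   Since E_j >= j, {j : E_j <= t} is contained in [t]. *)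
Definition FDPstar {T} {R : realType} (H0 : pred nat) (E : nat -> nat)
  (pv lev : nat -> T -> R) (t : nat) (x : T) : R :=
  (\sum_(1 <= j < t.+1 | H0 j) lev j x) / Num.max (numR E pv lev t x) 1.

(* Main.v *)
Require Import Defs.
From HB Require Import structures.
From mathcomp Require Import all_boot all_order all_algebra.
From mathcomp Require Import all_classical all_reals all_analysis measurable_realfun.
From mathcomp Require Import zify.
Import Order.TTheory GRing.Theory Num.Theory.
Local Open Scope classical_set_scope.
Local Open Scope ring_scope.


Lemma key d (T : measurableType d) (R : realType) (Pr : probability T R)
  (G : set (set T)) (p l : T -> R)
  (mp : measurable_fun setT p) (ml : measurable_fun setT l)
  (l0 : forall x, 0 <= l x) (l1 : forall x, l x < 1)
  (lG : forall B, measurable B -> G (l @^-1` B))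
  (hs : forall u : R, 0 <= u <= 1 -> forall A, G A ->
     (Pr (A `&` [set x | (p x <= u)%R]) <= u%:E * Pr A)%E) :
  (Pr [set x | (p x <= l x)%R] <= \int[Pr]_x (l x)%:E)%E.
Proof.
set A := [set x | p x <= l x].
have mA : measurable A.
  by rewrite -[A]setTI; apply: measurable_fun_le.
apply/lee_addgt0Pr => e e0.
set n := (Num.truncn e^-1).+1.
have n0 : (0 < n%:R :> R) by rewrite ltr0n.
have ne : n%:R^-1 <= e.
  have h := truncnS_gt e^-1.
  rewrite -[e]invrK; apply/ltW; rewrite ltf_pV2 //; rewrite posrE ?invr_gt0 //.
pose S (k : nat) : set R := ( *%R^~ (n%:R : R)) @^-1` [set` `[(k%:R : R), k.+1%:R[%R].
have mS k : measurable (S k).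
  by rewrite -[S k]setTI; apply: mulrr_measurable => //; exact: measurable_itv.
pose B k := l @^-1` S k.
have mB k : measurable (B k) by rewrite -[B k]setTI; apply: ml.
have BE k x : B k x <-> Num.truncn (l x * n%:R) = k.
  rewrite /B /S /= in_itv /= -truncn_eq ?mulr_ge0 //; split; by move/eqP.
pose C k := B k `&` [set x | p x <= k.+1%:R / n%:R].
have mC k : measurable (C k).
  apply: measurableI => //.
  by have := measurable_fun_le measurableT mp (measurable_cst (k.+1%:R / n%:R : R)); rewrite setTI.
have k0n x : (Num.truncn (l x * n%:R) < n)%N.
  by rewrite truncn_lt_nat ?mulr_ge0 // gtr_pMl.
have ind0 (D : set T) x : 0 <= \1_D x :> R by rewrite indicE ler0n.
have step1 : (\int[Pr]_x (\1_A x)%:E <= \int[Pr]_x (\sum_(k < n) \1_(C k) x)%:E)%E.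
  apply: ge0_le_integral => //.
  - by apply/measurable_EFinP; exact: measurable_indic.
  - by apply/measurable_EFinP; apply: measurable_sum => k; exact: measurable_indic.
  move=> x _; rewrite lee_fin [X in X <= _]indicE.
  have [xA|xA] := pselect (A x); last by rewrite memNset //; apply: sumr_ge0 => k _.
  rewrite mem_set // (bigD1 (Ordinal (k0n x))) //= indicE mem_set; last first.
    split; first by apply/BE.
    rewrite /= ler_pdivlMr //.
    by apply: (le_trans (ler_wpM2r (ltW n0) xA)); apply/ltW; exact: truncnS_gt.
  by rewrite [true%:R]/= lerDl; apply: sumr_ge0.
have step3 : (\int[Pr]_x (\sum_(k < n) \1_(C k) x)%:E = \sum_(k < n) Pr (C k))%E.
  under eq_integral do rewrite -sumEFin.
  rewrite ge0_integral_sum //; try (by move=> k; apply/measurable_EFinP; exact: measurable_indic); try (by move=> k x _; rewrite lee_fin).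
  by apply: eq_bigr => k _; rewrite integral_indic // setIT.
have step4 : (\sum_(k < n) Pr (C k) <= \sum_(k < n) (k.+1%:R / n%:R)%:E * Pr (B k))%E.
  apply: lee_sum => k _; apply: hs; last exact: lG.
  rewrite divr_ge0 //= ler_pdivrMr // mul1r ler_nat; exact: ltn_ord.
have step5 : (\sum_(k < n) (k.+1%:R / n%:R)%:E * Pr (B k) =
    \int[Pr]_x (\sum_(k < n) (k.+1%:R / n%:R) * \1_(B k) x)%:E)%E.
  under eq_integral do rewrite -sumEFin.
  rewrite ge0_integral_sum //; try (by move=> k; apply/measurable_EFinP; apply: measurable_funM => //; exact: measurable_indic); try (by move=> k x _; rewrite lee_fin mulr_ge0).
  apply: eq_bigr => k _; under eq_integral do rewrite EFinM.
  by rewrite ge0_integralZl_EFin //= ?integral_indic ?setIT //; apply/measurable_EFinP; exact: measurable_indic.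
have step6 : (\int[Pr]_x (\sum_(k < n) (k.+1%:R / n%:R) * \1_(B k) x)%:E <=
    \int[Pr]_x (l x + n%:R^-1)%:E)%E.
  apply: ge0_le_integral => //.
  - by move=> x _; rewrite lee_fin; apply: sumr_ge0 => k _; rewrite mulr_ge0.
  - by apply/measurable_EFinP; apply: measurable_sum => k; apply: measurable_funM => //; exact: measurable_indic.
  - by apply/measurable_EFinP; apply: measurable_funD => //.
  move=> x _; rewrite lee_fin (bigD1 (Ordinal (k0n x))) //= big1 ?addr0.
    rewrite indicE mem_set; last by apply/BE.
    rewrite [true%:R]/= mulr1 -addn1 natrD mulrDl mul1r lerD2r ler_pdivrMr //.
    by rewrite truncn_le mulr_ge0.
  move=> k /eqP kne; rewrite indicE memNset ?mulr0 //.
  by move/BE => h; apply: kne; apply: val_inj; rewrite /= h.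
have step7 : (\int[Pr]_x (l x + n%:R^-1)%:E = \int[Pr]_x (l x)%:E + n%:R^-1%:E)%E.
  under eq_integral do rewrite EFinD.
  rewrite ge0_integralD //; try (by move=> x _; rewrite lee_fin); try (exact/measurable_EFinP); try (by move=> x _; rewrite lee_fin invr_ge0).
  rewrite integral_cst //; set m := (X in (_ * X)%E); have -> : m = 1%E by exact: probability_setT.
  by rewrite mule1.
have step0 : Pr A = (\int[Pr]_x (\1_A x)%:E)%E by rewrite integral_indic // setIT.
rewrite step0; apply: (le_trans step1); rewrite step3; apply: (le_trans step4).
rewrite step5; apply: (le_trans step6); rewrite step7.
by apply: leeD2l; rewrite lee_fin.
Qed.

Lemma L_mono (L : nat -> nat) (hL : forall t, (L t.+1 <= (L t).+1)%N) :
  forall m j, (L (j + m) <= L j + m)%N.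
Proof.
elim=> [|m IH] j; first by rewrite !addn0.
rewrite addnS; apply: (leq_trans (hL _)); rewrite addnS ltnS; exact: IH.
Qed.

Lemma FX_mono d (T : measurableType d) (R : realType) (withC : bool)
  (E L : nat -> nat) (pv lev lam : nat -> T -> R)
  (hE : forall t, (t <= E t)%N)
  (hL : forall t, (L t.+1 <= (L t).+1)%N) j :
  F_minusX withC E L pv lev lam j `<=` F_minusX withC E L pv lev lam (E j).
Proof.
apply: sub_smallest2r; first exact: smallest_sigma_algebra.
move=> A [i [nc HA]]; exists i; split => //.
move: nc; rewrite /not_conflict => /and4P[h1 h2 h3 h4]; apply/and4P.
have hEj := hE j.
have hLj := @L_mono L hL (E j - j) j.
rewrite subnKC // in hLj.
split => //; lia.
Qed.

Lemma int_cst_prob d (T : measurableType d) (R : realType) (Pr : probability T R) (r : R) :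
  (\int[Pr]_x (cst r%:E) x = r%:E)%E.
Proof.
rewrite integral_cst //; set m := (X in (_ * X)%E); have -> : m = 1%E by exact: probability_setT.
by rewrite mule1.
Qed.

Theorem proposition1 (d : measure_display) (T : measurableType d) (R : realType)
  (Pr : probability T R) (withC : bool)
  (H0 : pred nat) (E L : nat -> nat) (pv lev lam : nat -> T -> R) (alpha : R)
  (hE : forall t, (t <= E t)%N)
  (hL : forall t, (L t.+1 <= (L t).+1)%N)
  (hpv : forall t, measurable_fun setT (pv t))
  (hlev : forall t, measurable_fun setT (lev t))
  (hlam : forall t, measurable_fun setT (lam t))
  (hlam_range : forall t x, lev t x <= lam t x /\ lam t x < 1)
  (hlev0 : forall j x, 0 <= lev j x)
  (hlevF : forall j, (0 < j)%N -> measurable_wrt (F_minusX withC E L pv lev lam j) (lev j))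
  (hsuper : forall t, (0 < t)%N -> H0 t -> forall u : R, 0 <= u <= 1 ->
     forall A, F_minusX withC E L pv lev lam (E t) A ->
     (Pr (A `&` [set x | (pv t x <= u)%R]) <= u%:E * Pr A)%E) :
  forall t : nat,
    {ae Pr, forall x, FDPstar H0 E pv lev t x <= alpha} ->
    mFDR Pr H0 E pv lev t <= alpha.
Proof.
move=> t hae.
pose Ai i := [set x | (pv i x <= lev i x)%R].
have mAi i : measurable (Ai i) by rewrite -[Ai i]setTI; apply: measurable_fun_le.
have indE i x : ((((pv i x <= lev i x)%R : bool) : nat)%:R : R) = \1_(Ai i) x.
  rewrite indicE; congr (_ %:R); congr nat_of_bool.
  by apply/idP/idP => [h|h]; [exact: mem_set | exact: set_mem h].
pose M x := Num.max (numR E pv lev t x) 1.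
have M1 x : 1 <= M x by rewrite /M le_max lexx orbT.
have mnumR : measurable_fun setT (numR E pv lev t).
  rewrite (_ : numR E pv lev t = (fun x => \sum_(i <- [seq i <- index_iota 1 t.+1 | (E i <= t)%N]) \1_(Ai i) x)).
    by apply: measurable_sum => i; exact: measurable_indic.
  by apply/funext => x; rewrite /numR big_filter; apply: eq_bigr => i _; rewrite indE.
have mM : measurable_fun setT M by apply: measurable_maxr.
have alpha0 : 0 <= alpha.
  case: hae => N [mN [PN0 sub]].
  have nsub : ~ (setT `<=` N).
    move=> sT; have h : (Pr setT <= Pr N)%E.
      by apply: le_measure => //; rewrite inE.
    by move: h; rewrite PN0 probability_setT lee_fin ler10.
  have [x Nx] : exists x, ~ N x.
    by apply/existsNP => allN; apply: nsub => y _; exact: allN.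
  have Px : FDPstar H0 E pv lev t x <= alpha.
    by apply: contrapT => h; apply: Nx; apply: sub; exact: h.
  apply: le_trans Px; rewrite /FDPstar divr_ge0 //; first by apply: sumr_ge0 => i _.
  exact: le_trans ler01 (M1 x).
pose S x := \sum_(1 <= i < t.+1 | H0 i) lev i x.
have e1 : ('E_Pr[numV H0 E pv lev t] = \sum_(1 <= i < t.+1 | H0 i && (E i <= t)%N) Pr (Ai i))%E.
  rewrite unlock.
  under eq_integral => x _ do rewrite /numV (eq_bigr _ (fun i _ => indE i x)) -sumEFin -big_filter.
  rewrite ge0_integral_sum //; try (by move=> i; apply/measurable_EFinP; exact: measurable_indic); try (by move=> i x _; rewrite lee_fin).
  rewrite big_filter; apply: eq_bigr => i _; by rewrite integral_indic // setIT.
have e2 : (\sum_(1 <= i < t.+1 | H0 i && (E i <= t)%N) Pr (Ai i) <=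
           \sum_(1 <= i < t.+1 | H0 i && (E i <= t)%N) \int[Pr]_x (lev i x)%:E)%E.
  rewrite big_nat_cond [X in (_ <= X)%E]big_nat_cond.
  apply: lee_sum => i /andP[/andP[i1 _] /andP[H0i _]].
  apply: (@key _ _ _ Pr (F_minusX withC E L pv lev lam (E i))) => //.
  - by move=> x; exact: le_lt_trans (hlam_range i x).1 (hlam_range i x).2.
  - by move=> B mB; apply: FX_mono => //; exact: hlevF.
  - by move=> u u01 A HA; exact: hsuper.
have e3 : (\sum_(1 <= i < t.+1 | H0 i && (E i <= t)%N) \int[Pr]_x (lev i x)%:E <=
           \sum_(1 <= i < t.+1 | H0 i) \int[Pr]_x (lev i x)%:E)%E.
  apply: lee_sum_nneg_subset; first by move=> i /andP[].
  by move=> i _; apply: integral_ge0 => x _; rewrite lee_fin.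
have e4 : (\sum_(1 <= i < t.+1 | H0 i) \int[Pr]_x (lev i x)%:E = \int[Pr]_x (S x)%:E)%E.
  under [RHS]eq_integral => x _ do rewrite /S -sumEFin -big_filter.
  rewrite ge0_integral_sum //; try (by move=> i; apply/measurable_EFinP); try (by move=> i x _; rewrite lee_fin).
  by rewrite big_filter.
have e5 : (\int[Pr]_x (S x)%:E <= \int[Pr]_x (alpha * M x)%:E)%E.
  apply: ae_ge0_le_integral => //.
  - by move=> x _; rewrite lee_fin; apply: sumr_ge0.
  - apply/measurable_EFinP; rewrite (_ : S = (fun x => \sum_(i <- [seq i <- index_iota 1 t.+1 | H0 i]) lev i x)).
      by apply: measurable_sum.
    by apply/funext => x; rewrite /S big_filter.
  - by move=> x _; rewrite lee_fin mulr_ge0 // (le_trans ler01 (M1 x)).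
  - by apply/measurable_EFinP; apply: measurable_funM.
  apply: filterS hae => x /= h _; rewrite lee_fin.
  by move: h; rewrite /FDPstar ler_pdivrMr // (lt_le_trans ltr01 (M1 x)).
have e6 : (\int[Pr]_x (alpha * M x)%:E = alpha%:E * \int[Pr]_x (M x)%:E)%E.
  under eq_integral do rewrite EFinM.
  rewrite ge0_integralZl_EFin //; first by move=> x _; rewrite lee_fin (le_trans ler01 (M1 x)).
  exact/measurable_EFinP.
have EMdef : ('E_Pr[fun x => Num.max (numR E pv lev t x) 1%R] = \int[Pr]_x (M x)%:E)%E.
  by rewrite unlock.
have EM1 : (1%:E <= \int[Pr]_x (M x)%:E)%E.
  have -> : (1%:E = \int[Pr]_x (cst 1%:E) x :> \bar R)%E.
    by rewrite int_cst_prob.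
  apply: ge0_le_integral => //; try exact/measurable_EFinP.
  by move=> x _; rewrite lee_fin.
have numRt x : numR E pv lev t x <= t%:R.
  rewrite /numR; apply: (@le_trans _ _ (\sum_(1 <= i < t.+1) (1:R))).
    rewrite big_mkcond /=; apply: ler_sum => i _; case: ifP => _ //.
    by case: (pv i x <= lev i x)%R.
  by rewrite sumr_const_nat subn1.
have EMub : (\int[Pr]_x (M x)%:E <= (t%:R + 1)%:E)%E.
  have -> : ((t%:R + 1)%:E = \int[Pr]_x (cst (t%:R + 1)%:E) x :> \bar R)%E.
    by rewrite int_cst_prob.
  apply: ge0_le_integral => //; try exact/measurable_EFinP; try (by move=> x _; rewrite lee_fin (le_trans ler01 (M1 x))).
  move=> x _; rewrite lee_fin /M ge_max; apply/andP; split.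
      by apply: (le_trans (numRt x)); rewrite lerDl.
    by rewrite lerDr ler0n.
have EMfin : (\int[Pr]_x (M x)%:E \is a fin_num)%E.
  rewrite ge0_fin_numE; last exact: le_trans (lee01) EM1.
  exact: le_lt_trans EMub (ltry _).
have EVle : ('E_Pr[numV H0 E pv lev t] <= alpha%:E * \int[Pr]_x (M x)%:E)%E.
  rewrite e1; apply: (le_trans e2); apply: (le_trans e3); rewrite e4 -e6; exact: e5.
have EV0 : (0 <= 'E_Pr[numV H0 E pv lev t])%E.
  rewrite e1; apply: sume_ge0 => i _; exact: measure_ge0.
have EVfin : ('E_Pr[numV H0 E pv lev t] \is a fin_num)%E.
  rewrite ge0_fin_numE //; apply: le_lt_trans EVle _.
  by rewrite -(fineK EMfin) -EFinM ltry.
rewrite /mFDR EMdef.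
move: EVle EM1; rewrite -(fineK EMfin) -{1}(fineK EVfin) -EFinM !lee_fin => h1 h2.
by rewrite ler_pdivrMr ?(lt_le_trans ltr01 h2) // mulrC.
Qed.
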